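(* Let $\mathsf{R}=(R,\iota_R,\nabla_{R,d})$ be a quasicoherent sheaf of rings on $\mathsf{Def}$, and let $\psi_R\colon R\to R$ be its Adams operation. Then: (1) $\psi_R\iota_R=\iota_R\psi_{\mathcal{O}}$; (2) for every $d\ge0$, $\nabla_{R,d}\circ\psi_R=(\psi_{\mathcal{O}_d}\otimes\psi_R)\circ\nabla_{R,d}$ as maps $R\to \mathcal{O}_d\otimes_{s_d,\mathcal{O},\iota_R}R$; (3) if $\mathsf{R}$ satisfies the Frobenius congruence, then $\psi_R(x)\equiv x^{p^h}\bmod \mathfrak{m}R$ for all $x\in R$.
   Context: Fix a prime $p$, a perfect field $\kappa$ of characteristic $p$, and a formal group $\Gamma/\kappa$ of height $1\le h<\infty$. Let $\mathcal{O}$ be the Lubin–Tate ring (maximal ideal $\mathfrak{m}$, residue field $\kappa$) and, for $d\ge0$, $\mathcal{O}_d$ the Strickland ring classifying subgroups of rank $p^d$ of the universal deformation (complete local, maximal ideal $\mathfrak{m}_d$, residue field $\kappa$, $\mathcal{O}_0=\mathcal{O}$). These come with ring maps $s_d,t_d\colon\mathcal{O}\to\mathcal{O}_d$ (source and target), $s_d$ making $\mathcal{O}_d$ a finitely generated free $\mathcal{O}$-module, and composition maps $\nabla_{d,e}\colon\mathcal{O}_{d+e}\to\mathcal{O}_d\otimes_{s_d,\mathcal{O},t_e}\mathcal{O}_e$, forming the graded category scheme representing deformations of $\Gamma$ and their height-$d$ morphisms. There are surjections $\nu_d\colon\mathcal{O}_d\to\mathcal{O}/p$ (representing height-$d$ Frobenius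 morphisms) with $\nu_ds_d$ the quotient map, $\nu_dt_d$ the $p^d$-th power map, and $\mathcal{O}_d\xrightarrow{\nu_d}\mathcal{O}/p\to\kappa$ the quotient map. There are ring automorphisms $\psi_{\mathcal{O}_d}$ of $\mathcal{O}_d$ ($\psi_{\mathcal{O}}=\psi_{\mathcal{O}_0}$), compatible with $s_d,t_d$ (i.e. $\psi_{\mathcal{O}_d}s_d=s_d\psi_{\mathcal{O}}$, $\psi_{\mathcal{O}_d}t_d=t_d\psi_{\mathcal{O}}$), representing the autoequivalence of deformations induced by the isomorphism $\sigma\colon(\phi^h)^*\Gamma\to\Gamma$ with $[p]=\sigma\operatorname{Fr}^h$ on $\Gamma$, and a ring map $q\colon\mathcal{O}_h\to\mathcal{O}$ representing the $p$-th power isogeny, with $qs_h=\mathrm{id}$, $qt_h=\psi_{\mathcal{O}}$, $(q\otimes\mathrm{id})\nabla_{h,d}=(\psi_{\mathcal{O}_d}\otimes q)\nabla_{d,h}$ as maps $\mathcal{O}_{d+h}\to\mathcal{O}_d$, and $\psi_{\mathcal{O}_d}(x)\equiv x^{p^h}\bmod\mathfrak{m}_d$. A quasicoherent sheaf of rings on $\mathsf{Def}$ is a triple $(R,\iota_R,\nabla_{R,d})$: a commutative ring $R$, a ring map $\iota_R\colon\mathcal{O}\to R$, and ring maps $\nabla_{R,d}\colon R\to\mathcal{O}_d\otimes_{s_d,\mathcal{O},\iota_R}R$ ($d\ge0$) such that $(\mathrm{id}\otimes\nabla_{R,e})\nabla_{R,d}=(\nabla_{d,e}\otimes\mathrm{id})\nabla_{R,d+e}$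 and $\nabla_{R,d}\iota_R=(\mathrm{id}\otimes\iota_R)t_d$. It satisfies the Frobenius congruence if for all $d$ the composite $(\nu_d\otimes\mathrm{id})\nabla_{R,d}\colon R\to\mathcal{O}/p\otimes_{\mathcal{O}}R=R/p$ equals $x\mapsto x^{p^d}\bmod p$. Its Adams operation is $\psi_R=(q\otimes\mathrm{id})\circ\nabla_{R,h}\colon R\to\mathcal{O}_h\otimes_{s_h,\mathcal{O},\iota_R}R\to\mathcal{O}\otimes_{\mathcal{O}}R=R$. *)

(* Defs.v *)
From HB Require Import structures.
From mathcomp Require Import all_boot all_order all_algebra.
Set Implicit Arguments. Unset Strict Implicit. Unset Printing Implicit Defensive.
Import GRing.Theory.
Local Open Scope ring_scope.

(* [agrees i j u v w] : the map w out of (a tensor product with structure maps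
   i, j) restricts to u along i and to v along j; i.e. w = "u (x) v". *)
Definition agrees (B C T D : Type) (i : B -> T) (j : C -> T)
  (u : B -> D) (v : C -> D) (w : T -> D) : Prop :=
  (forall b, w (i b) = u b) /\ (forall c, w (j c) = v c).

(* T together with i : B -> T, j : C -> T is the tensor product
   B (x)_{f,A,g} C of commutative rings, i.e. the pushout of f and g in the
   category of commutative rings (universal property). *)
Definition is_tensor (A B C T : comPzRingType)
  (f : {rmorphism A -> B}) (g : {rmorphism A -> C})
  (i : {rmorphism B -> T}) (j : {rmorphism C -> T}) : Prop :=
  (forall a, i (f a) = j (g a)) /\
  forall (D : comPzRingType) (u : {rmorphism B -> D}) (v : {rmorphism C -> D}),
    (forall a, u (f a) = v (g a)) ->
    (exists w : {rmorphism T -> D}, agrees i j u v w) /\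
    (forall w1 w2 : {rmorphism T -> D},
        agrees i j u v w1 -> agrees i j u v w2 -> forall t, w1 t = w2 t).

(* local ring with residue map rho onto the field k (maximal ideal = ker rho) *)
Definition is_local (A : comPzRingType) (k : fieldType) (rho : {rmorphism A -> k})
  : Prop :=
  (forall y, exists x, rho x = y) /\
  (forall x, rho x != 0 -> exists y, x * y = 1).

Definition is_finite_free (A B : comPzRingType) (s : {rmorphism A -> B}) : Prop :=
  exists (n : nat) (b : 'I_n -> B),
    (forall x, exists c : 'I_n -> A, x = \sum_(i < n) s (c i) * b i) /\
    (forall c c' : 'I_n -> A,
        \sum_(i < n) s (c i) * b i = \sum_(i < n) s (c' i) * b i ->
        forall i, c i = c' i).

Definition is_quot_p (A Q : comPzRingType) (pi : {rmorphism A -> Q}) (p : nat)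
  : Prop :=
  (forall y, exists x, pi x = y) /\
  (forall x, pi x = 0 <-> exists y, x = p%:R * y).

Definition tr (F : nat -> comPzRingType) (m n : nat) (e : m = n) (x : F m) : F n :=
  eq_rect m (fun k => F k : Type) x n e.

(* Main.v *)
Require Import Defs.
From HB Require Import structures.
From mathcomp Require Import all_boot all_order all_algebra.
Import GRing.Theory.
Local Open Scope ring_scope.
From mathcomp Require Import generic_quotient ring.
From Stdlib Require Import ClassicalDescription.
Set Implicit Arguments. Unset Strict Implicit. Unset Printing Implicit Defensive.
Local Open Scope quotient_scope.

Record ideal (A : comPzRingType) := Ideal {
  imem : A -> Prop;
  imem0 : imem 0;
  imemB : forall x y, imem x -> imem y -> imem (x - y);
  imemM : forall a x, imem x -> imem (a * x) }.

Section MyQuot.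
Variables (A : comPzRingType) (J : ideal A).
Let P := imem J.
Let P0 := imem0 J.
Let PB := @imemB A J.
Let PM := @imemM A J.

Definition Ib (x : A) : bool := if excluded_middle_informative (P x) then true else false.
Lemma IbP x : Ib x <-> P x.
Proof. by rewrite /Ib; case: excluded_middle_informative. Qed.

Lemma Ib0 : Ib 0. Proof. exact/IbP. Qed.
Lemma IbB x y : Ib x -> Ib y -> Ib (x - y).
Proof. by move=> /IbP ? /IbP ?; apply/IbP; apply: PB. Qed.
Lemma IbN x : Ib x -> Ib (- x).
Proof. by move=> h; rewrite -sub0r; apply: IbB => //; apply: Ib0. Qed.
Lemma IbD x y : Ib x -> Ib y -> Ib (x + y).
Proof. by move=> hx hy; rewrite -[y]opprK; apply: IbB => //; apply: IbN. Qed.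
Lemma IbM a x : Ib x -> Ib (a * x).
Proof. by move=> /IbP ?; apply/IbP; apply: PM. Qed.

Definition qeqv (x y : A) := Ib (x - y).
Lemma qeqv_is_equiv : equiv_class_of qeqv.
Proof.
split=> [x|x y|y x z]; rewrite /qeqv.
- by rewrite subrr Ib0.
- by apply/idP/idP => h; rewrite -opprB; apply: IbN.
- by move=> h1 h2; rewrite -[x](addrNK y) -addrA; apply: IbD.
Qed.

Canonical qeqv_equiv := EquivRelPack qeqv_is_equiv.
Canonical qeqv_encModRel := defaultEncModRel qeqv.

Definition quot := {eq_quot qeqv}.
HB.instance Definition _ : EqQuotient A qeqv quot := EqQuotient.on quot.
HB.instance Definition _ := Choice.on quot.

Lemma qBE x y : Ib (x - y) = (x == y %[mod quot]).
Proof. by rewrite piE. Qed.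

Definition qzero : quot := lift_cst quot 0.
Definition qadd := lift_op2 quot +%R.
Definition qopp := lift_op1 quot -%R.
Definition qone : quot := lift_cst quot 1.
Definition qmul := lift_op2 quot *%R.
Canonical pi_qzero_morph := PiConst qzero.
Canonical pi_qone_morph := PiConst qone.

Lemma pi_qopp : {morph \pi : x / - x >-> qopp x}.
Proof.
move=> x; unlock qopp; apply/eqP; rewrite piE /qeqv.
have := reprK (\pi_quot x); move/eqP; rewrite -qBE => h.
by rewrite opprK addrC.
Qed.
Canonical pi_qopp_morph := PiMorph1 pi_qopp.

Lemma pi_qadd : {morph \pi : x y / x + y >-> qadd x y}.
Proof.
move=> x y /=; unlock qadd; apply/eqP; rewrite piE /qeqv.
have /eqP := reprK (\pi_quot x); rewrite -qBE => hx.
have /eqP := reprK (\pi_quot y); rewrite -qBE => hy.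
have hx' : Ib (x - repr (\pi_quot x)) by rewrite -opprB; apply: IbN.
have hy' : Ib (y - repr (\pi_quot y)) by rewrite -opprB; apply: IbN.
by rewrite opprD addrACA; apply: IbD.
Qed.
Canonical pi_qadd_morph := PiMorph2 pi_qadd.

Lemma pi_qmul : {morph \pi : x y / x * y >-> qmul x y}.
Proof.
move=> x y /=; unlock qmul; apply/eqP; rewrite piE /qeqv.
have /eqP := reprK (\pi_quot x); rewrite -qBE => hx.
have /eqP := reprK (\pi_quot y); rewrite -qBE => hy.
set a := repr _ in hx *; set b := repr _ in hy *.
have -> : x * y - a * b = - (y * (a - x)) - a * (b - y).
  by ring.
by apply: IbB; [apply: IbN; apply: IbM | apply: IbM].
Qed.
Canonical pi_qmul_morph := PiMorph2 pi_qmul.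

Lemma qaddA : associative qadd.
Proof. by move=> x y z; rewrite -[x]reprK -[y]reprK -[z]reprK !piE addrA. Qed.
Lemma qaddC : commutative qadd.
Proof. by move=> x y; rewrite -[x]reprK -[y]reprK !piE addrC. Qed.
Lemma qadd0 : left_id qzero qadd.
Proof. by move=> x; rewrite -[x]reprK !piE add0r. Qed.
Lemma qaddN : left_inverse qzero qopp qadd.
Proof. by move=> x; rewrite -[x]reprK !piE addNr. Qed.
HB.instance Definition _ := GRing.isZmodule.Build quot qaddA qaddC qadd0 qaddN.

Lemma qmulA : associative qmul.
Proof. by move=> x y z; rewrite -[x]reprK -[y]reprK -[z]reprK !piE mulrA. Qed.
Lemma qmulC : commutative qmul.
Proof. by move=> x y; rewrite -[x]reprK -[y]reprK !piE mulrC. Qed.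
Lemma qmul1 : left_id qone qmul.
Proof. by move=> x; rewrite -[x]reprK !piE mul1r. Qed.
Lemma qmulDl : left_distributive qmul qadd.
Proof. by move=> x y z; rewrite -[x]reprK -[y]reprK -[z]reprK !piE mulrDl. Qed.
HB.instance Definition _ := GRing.Zmodule_isComPzRing.Build quot qmulA qmulC qmul1 qmulDl.

Definition piq (x : A) : quot := \pi_quot x.
Lemma piq_zmod : GRing.zmod_morphism piq.
Proof. by move=> x y; rewrite /piq !piE. Qed.
Lemma piq_mon : GRing.monoid_morphism piq.
Proof. by split; [rewrite /piq piE | move=> x y; rewrite /piq !piE]. Qed.
HB.instance Definition _ := GRing.isZmodMorphism.Build A quot piq piq_zmod.
HB.instance Definition _ := GRing.isMonoidMorphism.Build A quot piq piq_mon.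

Lemma piq_eq0 x : piq x = 0 <-> imem J x.
Proof.
have z : \pi_quot 0 = 0 :> quot by rewrite piE.
rewrite -[imem J x]/(P x) -IbP /piq -z; split.
  by move/eqP; rewrite eqmodE /= /qeqv subr0.
by move=> h; apply/eqP; rewrite eqmodE /= /qeqv subr0.
Qed.
End MyQuot.

Close Scope quotient_scope.
Unset Implicit Arguments.

Lemma transport_lemma (O : comPzRingType) (Od : nat -> comPzRingType)
  (s : forall d, {rmorphism O -> Od d}) (R : comPzRingType) (iota : {rmorphism O -> R})
  (T : nat -> comPzRingType)
  (inlT : forall d, {rmorphism Od d -> T d}) (inrT : forall d, {rmorphism R -> T d})
  (hT : forall d, is_tensor (s d) iota (inlT d) (inrT d))
  (NR : forall d, {rmorphism R -> T d}) (W : comPzRingType) (c : {rmorphism R -> W})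
  (m n : nat) (e : m = n) (Am : {rmorphism Od m -> W}) (An : {rmorphism Od n -> W})
  (hA : forall y, Am y = An (@tr Od _ _ e y)) (hc : forall a, An (s n a) = c (iota a))
  (Gm : {rmorphism T m -> W}) (Gn : {rmorphism T n -> W}) :
  agrees (inlT m) (inrT m) Am c Gm -> agrees (inlT n) (inrT n) An c Gn ->
  forall x, Gm (NR m x) = Gn (NR n x).
Proof.
case: n / e An Gn hA hc => An Gn hA hc [h1 h2] h3 x.
have h1' : agrees (inlT m) (inrT m) An c Gm.
  by split=> // b; rewrite h1 hA.
exact: (((hT m).2 W An c hc).2 Gm Gn h1' h3 (NR m x)).
Qed.

Definition mform (O R : comPzRingType) (kappa : fieldType) (rho : {rmorphism O -> kappa})
  (iota : {rmorphism O -> R}) (m : R) : Prop :=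
  exists l : seq (O * R), all (fun z => rho z.1 == 0) l /\
    m = \sum_(z <- l) iota z.1 * z.2.
Arguments mform {O R kappa}.

Lemma mform0 O R kappa rho iota : @mform O R kappa rho iota 0.
Proof. by exists [::]; rewrite big_nil. Qed.

Lemma mformB O R kappa rho iota x y :
  @mform O R kappa rho iota x -> mform rho iota y -> mform rho iota (x - y).
Proof.
move=> [l1 [h1 ->]] [l2 [h2 ->]].
exists (l1 ++ [seq (z.1, - z.2) | z <- l2]); split.
  by rewrite all_cat h1 /= all_map.
by rewrite big_cat big_map /= -sumrN; congr (_ + _); apply: eq_bigr => z _; rewrite mulrN.
Qed.

Lemma mformM O R kappa rho iota a x :
  @mform O R kappa rho iota x -> mform rho iota (a * x).
Proof.
move=> [l [h ->]]; exists [seq (z.1, a * z.2) | z <- l]; split.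
  by rewrite all_map.
by rewrite big_map mulr_sumr; apply: eq_bigr => z _; rewrite mulrCA.
Qed.

Lemma mform_ord O R kappa rho iota x : @mform O R kappa rho iota x ->
  exists (n : nat) (a : 'I_n -> O) (r : 'I_n -> R),
    (forall i, rho (a i) = 0) /\ x = \sum_(i < n) iota (a i) * r i.
Proof.
move=> [l [h ->]]; exists (size l), (fun i => (nth (0, 0) l i).1),
  (fun i => (nth (0, 0) l i).2); split.
  by move=> i; move/allP: h => /(_ _ (mem_nth (0, 0) (ltn_ord i))) /eqP.
by rewrite (big_nth (0, 0)) big_mkord.
Qed.

Lemma residue_q (O : comPzRingType) (kappa : fieldType) (rho : {rmorphism O -> kappa})
  (hO : is_local rho) (B : comPzRingType) (rhoB : {rmorphism B -> kappa})
  (hB : is_local rhoB) (s : {rmorphism O -> B}) (q : {rmorphism B -> O})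
  (hqs : forall x, q (s x) = x) (hrs : forall x, rhoB (s x) = rho x) :
  forall y, rho (q y) = rhoB y.
Proof.
move=> y; have [a ha] := hO.1 (rho (q y)).
set z := y - s a.
have hz : rho (q z) = 0 by rewrite /z rmorphB /= hqs rmorphB /= ha subrr.
have hz' : rhoB z = 0.
  apply/eqP; apply/negPn/negP => /hB.2 [w hw].
  have := congr1 (rho \o q) hw; rewrite /= rmorphM /= rmorphM /= hz mul0r rmorph1 rmorph1.
  by move/eqP; rewrite eq_sym oner_eq0.
by move: hz'; rewrite /z rmorphB /= hrs -ha => /eqP; rewrite subr_eq0 => /eqP.
Qed.

Theorem proposition3p5
  (* prime, residue field, height *)
  (p : nat) (hp : prime p) (kappa : fieldType)
  (hchar : p \in [pchar kappa]) (hperf : forall y : kappa, exists z, z ^+ p = y)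
  (h : nat) (hh : (1 <= h)%N)
  (* Lubin--Tate ring *)
  (O : comPzRingType) (rho : {rmorphism O -> kappa}) (hO : is_local rho)
  (* Strickland rings, source and target *)
  (Od : nat -> comPzRingType) (rhod : forall d, {rmorphism Od d -> kappa})
  (hOd : forall d, is_local (rhod d))
  (s t : forall d, {rmorphism O -> Od d})
  (hfree : forall d, is_finite_free (s d))
  (* O_d (x)_{s_d,O,t_e} O_e and composition maps *)
  (M : nat -> nat -> comPzRingType)
  (mL : forall d e, {rmorphism Od d -> M d e})
  (mR : forall d e, {rmorphism Od e -> M d e})
  (hM : forall d e, is_tensor (s d) (t e) (mL d e) (mR d e))
  (Nab : forall d e, {rmorphism Od (d + e)%N -> M d e})
  (hNs : forall (d e : nat) x, Nab d e (s (d + e)%N x) = mR d e (s e x))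
  (hNt : forall (d e : nat) x, Nab d e (t (d + e)%N x) = mL d e (t d x))
  (* O/p and the Frobenius maps nu_d *)
  (Op : comPzRingType) (piO : {rmorphism O -> Op}) (hpiO : is_quot_p piO p)
  (rhobar : {rmorphism Op -> kappa}) (hrhobar : forall x, rhobar (piO x) = rho x)
  (nu : forall d, {rmorphism Od d -> Op})
  (hnu_surj : forall d y, exists x, nu d x = y)
  (hnu_s : forall d x, nu d (s d x) = piO x)
  (hnu_t : forall d x, nu d (t d x) = piO (x ^+ (p ^ d)%N))
  (hnu_res : forall d x, rhobar (nu d x) = rhod d x)
  (* the automorphisms psi *)
  (psiO : {rmorphism O -> O}) (hpsiO : bijective psiO)
  (hpsiO_cong : forall x, rho (psiO x - x ^+ (p ^ h)%N) = 0)
  (psi : forall d, {rmorphism Od d -> Od d}) (hpsi : forall d, bijective (psi d))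
  (hpsi_s : forall d x, psi d (s d x) = s d (psiO x))
  (hpsi_t : forall d x, psi d (t d x) = t d (psiO x))
  (hpsi_cong : forall d x, rhod d (psi d x - x ^+ (p ^ h)%N) = 0)
  (* the p-th power isogeny q *)
  (q : {rmorphism Od h -> O})
  (hq_s : forall x, q (s h x) = x)
  (hq_t : forall x, q (t h x) = psiO x)
  (hq_nab : forall d (F : {rmorphism M h d -> Od d}) (G : {rmorphism M d h -> Od d}),
      agrees (mL h d) (mR h d) (t d \o q) idfun F ->
      agrees (mL d h) (mR d h) (psi d) (s d \o q) G ->
      forall x : Od (d + h)%N, F (Nab h d (@tr Od _ _ (addnC d h) x)) = G (Nab d h x))
  (* a quasicoherent sheaf of rings (R, iota, nabla_R) *)
  (R : comPzRingType) (iota : {rmorphism O -> R})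
  (T : nat -> comPzRingType)
  (inlT : forall d, {rmorphism Od d -> T d}) (inrT : forall d, {rmorphism R -> T d})
  (hT : forall d, is_tensor (s d) iota (inlT d) (inrT d))
  (NR : forall d, {rmorphism R -> T d})
  (hNR_coassoc : forall (d e : nat) (W : comPzRingType)
      (a : {rmorphism Od d -> W}) (b : {rmorphism Od e -> W}) (c : {rmorphism R -> W})
      (u : {rmorphism T e -> W}) (F : {rmorphism T d -> W})
      (v : {rmorphism M d e -> W}) (G : {rmorphism T (d + e)%N -> W}),
      agrees (inlT e) (inrT e) b c u ->
      agrees (inlT d) (inrT d) a (u \o NR e) F ->
      agrees (mL d e) (mR d e) a b v ->
      agrees (inlT (d + e)%N) (inrT (d + e)%N) (v \o Nab d e) c G ->
      forall x, F (NR d x) = G (NR (d + e)%N x))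
  (hNR_iota : forall d x, NR d (iota x) = inlT d (t d x))
  (* the map q (x) id : O_h (x)_O R -> R; psi_R := (q (x) id) o nabla_{R,h} *)
  (Q : {rmorphism T h -> R})
  (hQ : agrees (inlT h) (inrT h) (iota \o q) idfun Q) :
  let psiR := fun x => Q (NR h x) in
  (* (1) *)
  (forall x, psiR (iota x) = iota (psiO x)) /\
  (* (2) *)
  (forall d (Phi : {rmorphism T d -> T d}),
      agrees (inlT d) (inrT d) (inlT d \o psi d) (inrT d \o psiR) Phi ->
      forall x, NR d (psiR x) = Phi (NR d x)) /\
  (* (3) *)
  (forall (Rp : comPzRingType) (piR : {rmorphism R -> Rp})
          (iotabar : {rmorphism Op -> Rp}),
      is_quot_p piR p ->
      (forall x, iotabar (piO x) = piR (iota x)) ->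
      (* Frobenius congruence *)
      (forall d (N : {rmorphism T d -> Rp}),
          agrees (inlT d) (inrT d) (iotabar \o nu d) piR N ->
          forall x, N (NR d x) = piR (x ^+ (p ^ d)%N)) ->
      forall x, exists (n : nat) (a : 'I_n -> O) (r : 'I_n -> R),
        (forall i, rho (a i) = 0) /\
        psiR x - x ^+ (p ^ h)%N = \sum_(i < n) iota (a i) * r i).
Proof.
move=> psiR.
have hQl := hQ.1; have hQr := hQ.2.
split.
  by move=> x; rewrite /psiR hNR_iota hQl /= hq_t.
split.
  move=> d Phi [hPl hPr] x.
  have [[F0 [hF0l hF0r]] _] := (hM h d).2 (Od d) (t d \o q) idfun
      (fun a => congr1 (t d) (hq_s a)).
  have [[G0 [hG0l hG0r]] _] := (hM d h).2 (Od d) (psi d) (s d \o q)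
      (fun a => etrans (hpsi_s d a) (congr1 (s d) (esym (hq_t a)))).
  have hnab := hq_nab d F0 G0 (conj hF0l hF0r) (conj hG0l hG0r).
  have hTd := (hT d).1.
  have cA : forall a, (inlT d \o F0 \o Nab h d) (s (h + d)%N a) = inrT d (iota a).
    by move=> a; rewrite /= hNs hF0r /= hTd.
  have [[GA hGA] _] := (hT (h + d)%N).2 (T d) (inlT d \o F0 \o Nab h d) (inrT d) cA.
  have sideA : NR d (Q (NR h x)) = GA (NR (h + d)%N x).
    apply: (hNR_coassoc h d (T d) (inlT d \o t d \o q) (inlT d) (inrT d) idfun
      (NR d \o Q) (inlT d \o F0) GA) => //.
    - split=> b /=; first by rewrite hQl /= hNR_iota.
      by rewrite hQr.
    - by split=> b /=; rewrite ?hF0l ?hF0r.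
  have cB : forall a, (inlT d \o G0 \o Nab d h) (s (d + h)%N a) = inrT d (iota a).
    by move=> a; rewrite /= hNs hG0r /= hq_s hTd.
  have [[GB hGB] _] := (hT (d + h)%N).2 (T d) (inlT d \o G0 \o Nab d h) (inrT d) cB.
  have sideB : Phi (NR d x) = GB (NR (d + h)%N x).
    apply: (hNR_coassoc d h (T d) (inlT d \o psi d) (inrT d \o iota \o q) (inrT d)
      (inrT d \o Q) Phi (inlT d \o G0) GB) => //.
    - by split=> b /=; [have := hQl b | have := hQr b]; move=> ->.
    - by split=> b /=; rewrite ?hG0l ?hG0r //= hTd.
  rewrite /psiR sideA sideB.
  symmetry.
  apply: (transport_lemma O Od s R iota T inlT inrT hT NR (T d) (inrT d)
    (d + h)%N (h + d)%N (addnC d h) (inlT d \o G0 \o Nab d h) (inlT d \o F0 \o Nab h d))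
    => //.
  by move=> y /=; rewrite hnab.
move=> Rp piR iotabar hpiR hiot hfrob x.
pose mf := mform rho iota.
pose Jm := fun z : Rp => exists m, mf m /\ z = piR m.
have J0 : Jm 0 by exists 0; split; [exact: mform0 | by rewrite rmorph0].
have JB : forall x y, Jm x -> Jm y -> Jm (x - y).
  move=> _ _ [m1 [h1 ->]] [m2 [h2 ->]]; exists (m1 - m2); split.
    exact: mformB.
  by rewrite rmorphB.
have JM : forall a x, Jm x -> Jm (a * x).
  move=> a _ [m [hm ->]]; have [r <-] := hpiR.1 a; exists (r * m); split.
    exact: mformM.
  by rewrite rmorphM.
pose J := @Ideal Rp Jm J0 JB JM.
pose pi := piq J.
have cN : forall a, (iotabar \o nu h) (s h a) = piR (iota a).
  by move=> a /=; rewrite hnu_s hiot.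
have [[N hN] _] := (hT h).2 Rp (iotabar \o nu h) piR cN.
have hfr := hfrob h N hN x.
have hres : forall y, rho (q y) = rhod h y.
  apply: (residue_q O kappa rho hO (Od h) (rhod h) (hOd h) (s h) q hq_s).
  by move=> a; rewrite -hnu_res hnu_s hrhobar.
have cU : forall a, (pi \o (iotabar \o nu h)) (s h a) = (pi \o piR) (iota a).
  by move=> a /=; rewrite hnu_s hiot.
have huniq := ((hT h).2 (quot J) (pi \o (iotabar \o nu h)) (pi \o piR) cU).2
  (pi \o piR \o Q) (pi \o N).
have key : (pi \o piR \o Q) (NR h x) = (pi \o N) (NR h x).
  apply: huniq; last first.
    by split=> b /=; [rewrite hN.1 | rewrite hN.2].
  split=> b /=.
    have [a' ha'] := hpiO.1 (nu h b).
    have -> : Q (inlT h b) = iota (q b) by have := hQl b; move=> ->.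
    rewrite -ha' hiot; apply/eqP; rewrite -subr_eq0 -!rmorphB; apply/eqP/piq_eq0.
    exists (iota (q b - a')); split => //.
    exists [:: (q b - a', 1)]; split.
      by rewrite /= andbT rmorphB /= hres -hnu_res -ha' hrhobar subrr.
    by rewrite big_cons big_nil mulr1 addr0.
  by have := hQr b; move=> ->.
move: key; rewrite /= hfr; move/eqP; rewrite -subr_eq0 -rmorphB; move/eqP/piq_eq0.
move=> [m [hm hpm]].
have : piR (psiR x - x ^+ (p ^ h)%N - m) = 0 by rewrite !rmorphB /= -hpm subrr.
move/(hpiR.2) => [y hy].
apply: mform_ord.
have -> : psiR x - x ^+ (p ^ h)%N = m - (0 - iota p%:R * y).
  by rewrite sub0r opprK rmorph_nat -hy addrCA subrr addr0.
apply: mformB => //; apply: mformB; first exact: mform0.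
exists [:: (p%:R, y)]; split.
  by rewrite /= andbT rmorph_nat (pcharf0 hchar).
by rewrite big_cons big_nil addr0 rmorph_nat.
Qed.
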